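(* Let $N\ge 2$ and let $\Gamma_1,\dots,\Gamma_N$ be nonzero real numbers. Consider the system of $N$ planar point sources $$\dot z_k = -\sum_{l\neq k}\Gamma_l\,\frac{z_k-z_l}{|z_k-z_l|^2}=-\sum_{l\neq k}\frac{\Gamma_l}{\bar z_k-\bar z_l},\qquad k=1,\dots,N,$$ on the set of configurations $(z_1,\dots,z_N)\in\mathbb{C}^N$ with $z_j\neq z_k$ for all $j\neq k$, and let $I=\sum_{k=1}^N\Gamma_k|z_k|^2$ be the moment of inertia. If $\sum_{l<k}\Gamma_k\Gamma_l=0$, then $I$ is a first integral of the system. If $\sum_{l<k}\Gamma_k\Gamma_l\neq 0$, then all solutions are gradient-like with respect to $I$, i.e. $I$ is strictly monotone along every solution.
   Context: The number $-\Gamma_k$ is the intensity of the $k$-th point source; the sum $\sum_{l<k}\Gamma_k\Gamma_l$ runs over all unordered pairs of distinct indices. *)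

(* Defs.v *)
(* R : realType. A point z_k in C is encoded by its
   real coordinates (x_k, y_k). *)
From HB Require Import structures.
From mathcomp Require Import all_boot all_order all_algebra.
From mathcomp Require Import all_classical all_reals all_analysis.
Set Implicit Arguments. Unset Strict Implicit. Unset Printing Implicit Defensive.
Import Order.TTheory GRing.Theory Num.Theory.
Import numFieldNormedType.Exports.
Local Open Scope ring_scope.
Local Open Scope classical_set_scope.

Section PointSources.
Variables (R : realType) (N : nat).

Definition sqdist (x y : 'I_N -> R) (k l : 'I_N) : R :=
  (x k - x l) ^+ 2 + (y k - y l) ^+ 2.

Definition velx (G x y : 'I_N -> R) (k : 'I_N) : R :=
  - \sum_(l < N | l != k) G l * (x k - x l) / sqdist x y k l.
Definition vely (G x y : 'I_N -> R) (k : 'I_N) : R :=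
  - \sum_(l < N | l != k) G l * (y k - y l) / sqdist x y k l.

Definition distinct_config (x y : 'I_N -> R) : Prop :=
  forall j k : 'I_N, j != k -> (x j, y j) != (x k, y k).

Definition is_solution (G : 'I_N -> R) (J : set R) (x y : R -> 'I_N -> R) : Prop :=
  forall t, J t ->
    distinct_config (x t) (y t) /\
    forall k : 'I_N,
      derivable (fun s => x s k) t 1 /\ derivable (fun s => y s k) t 1 /\
      (fun s => x s k)^`() t = velx G (x t) (y t) k /\
      (fun s => y s k)^`() t = vely G (x t) (y t) k.

Definition inertia (G x y : 'I_N -> R) : R :=
  \sum_(k < N) G k * (x k ^+ 2 + y k ^+ 2).

Definition pair_sum (G : 'I_N -> R) : R :=
  \sum_(k < N) \sum_(l < N | (l < k)%N) G k * G l.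

End PointSources.

(* Main.v *)
Require Import Defs.
From HB Require Import structures.
From mathcomp Require Import all_boot all_order all_algebra.
From mathcomp Require Import all_classical all_reals all_analysis.
From mathcomp Require Import ring lra.
Import Order.TTheory GRing.Theory Num.Theory.
Import numFieldNormedType.Exports.
Local Open Scope ring_scope.
Local Open Scope classical_set_scope.

Lemma sqdist_neq0 (R : realType) N (x y : 'I_N -> R) k l :
  distinct_config x y -> l != k -> sqdist x y k l != 0.
Proof.
move=> D lk; have := D _ _ lk; apply: contra => /eqP.
rewrite /sqdist => /eqP; rewrite paddr_eq0 ?sqr_ge0 // !sqrf_eq0 !subr_eq0.
by case/andP => /eqP -> /eqP ->.
Qed.

Lemma alg (R : realType) N (G x y : 'I_N -> R) : distinct_config x y ->
  \sum_(k < N) G k * (2 * x k * velx G x y k + 2 * y k * vely G x y k)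
  = - (2 * pair_sum G).
Proof.
move=> D.
pose f k l := G k * G l * (x k * (x k - x l) + y k * (y k - y l)) / sqdist x y k l.
have E1 : forall k, G k * (2 * x k * velx G x y k + 2 * y k * vely G x y k)
   = - 2 * \sum_(l < N) (if l != k then f k l else 0).
  move=> k; rewrite /velx /vely -big_mkcond /= !mulrN !mulr_sumr -!sumrN -big_split /=.
  rewrite mulr_sumr; apply: eq_bigr => l _; rewrite /f; ring.
under eq_bigr do rewrite E1.
rewrite -mulr_sumr.
have E2 : \sum_(k < N) \sum_(l < N) (if l != k then f k l else 0)
  = \sum_(k < N) \sum_(l < N) ((if (l < k)%N then f k l else 0) + (if (k < l)%N then f k l else 0)).
  apply: eq_bigr => k _; apply: eq_bigr => l _.
  case: (ltngtP l k) => [lk|kl|lk]; rewrite ?addr0 ?add0r.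
  - by rewrite ifT // neq_ltn lk.
  - by rewrite ifT // neq_ltn kl orbT.
  - have -> : l = k by apply: val_inj.
    by rewrite eqxx.
rewrite E2; under eq_bigr do rewrite big_split /=.
rewrite big_split /= [X in _ + X]exchange_big /=.
rewrite -big_split /=.
have -> : \sum_(i < N) (\sum_(i0 < N) (if (i0 < i)%N then f i i0 else 0) +
     \sum_(j < N) (if (j < i)%N then f j i else 0))
  = \sum_(k < N) \sum_(l < N | (l < k)%N) G k * G l.
  apply: eq_bigr => k _; rewrite -big_split /= [RHS]big_mkcond /=; apply: eq_bigr => l _.
  case: ifP => lk; last by rewrite addr0.
  have lk' : l != k by rewrite neq_ltn lk.
  have kl' : k != l by rewrite eq_sym.
  have d1 := @sqdist_neq0 _ _ _ _ _ _ D lk'; have d2 := @sqdist_neq0 _ _ _ _ _ _ D kl'.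
  rewrite /f; have -> : sqdist x y l k = sqdist x y k l by rewrite /sqdist; ring.
  apply: (mulIf d1); rewrite mulrDl !mulfVK //; rewrite /sqdist; ring.
by rewrite /pair_sum; ring.
Qed.

Lemma deriv_I (R : realType) N (G : 'I_N -> R) J x y t :
  is_solution G J x y -> J t ->
  is_derive t 1 (fun s => inertia G (x s) (y s)) (- (2 * pair_sum G)).
Proof.
move=> S Jt; have [D H] := S t Jt.
rewrite -(@alg _ _ G _ _ D).
have -> : (fun s => inertia G (x s) (y s)) =
  \sum_(k < N) (fun s => G k * (x s k ^+ 2 + y s k ^+ 2)).
  by apply/funext => s; rewrite /inertia fct_sumE.
apply: is_derive_sum => k.
have [dx [dy [ex ey]]] := H k.
have Dx : is_derive t 1 (fun s => x s k) (velx G (x t) (y t) k).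
  by rewrite -ex derive1E; apply: derivableP.
have Dy : is_derive t 1 (fun s => y s k) (vely G (x t) (y t) k).
  by rewrite -ey derive1E; apply: derivableP.
have -> : (fun s => G k * (x s k ^+ 2 + y s k ^+ 2)) =
   G k \*: ((fun s => x s k) ^+ 2 + (fun s => y s k) ^+ 2).
  by apply/funext => s.
apply: is_derive_eq.
by rewrite /= expr1.
Qed.

Lemma incr (R : realType) N (G : 'I_N -> R) J x y s t :
  is_interval J -> is_solution G J x y -> J s -> J t -> s < t ->
  inertia G (x t) (y t) - inertia G (x s) (y s) = - (2 * pair_sum G) * (t - s).
Proof.
move=> IJ S Js Jt st.
have sub : forall z, z \in `[s, t]%R -> J z.
  by move=> z; rewrite in_itv /= => zst; apply: (IJ s t).
have h1 : forall z, z \in `]s, t[%R ->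
    is_derive z 1 (fun s => inertia G (x s) (y s)) (- (2 * pair_sum G)).
  move=> z zst; apply: (@deriv_I _ _ _ J); first exact: S.
  apply: sub; move: zst; rewrite !in_itv /= => /andP[a b].
  by rewrite !ltW.
have h2 : {within `[s, t], continuous (fun s => inertia G (x s) (y s))}.
  apply: derivable_within_continuous => z zst.
  have := @deriv_I _ _ G J x y z S (sub z zst).
  by case.
by have [c _ ->] := @MVT R (fun s => inertia G (x s) (y s)) (fun _ => - (2 * pair_sum G)) s t st h1 h2.
Qed.

Theorem mainTheorem2 (R : realType) (N : nat) (G : 'I_N -> R) :
  (2 <= N)%N ->
  (forall k, G k != 0) ->
  (pair_sum G = 0 ->
     forall (J : set R) (x y : R -> 'I_N -> R),
       open J -> is_interval J -> is_solution G J x y ->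
       forall s t, J s -> J t -> inertia G (x s) (y s) = inertia G (x t) (y t))
  /\
  (pair_sum G != 0 ->
     forall (J : set R) (x y : R -> 'I_N -> R),
       open J -> is_interval J -> is_solution G J x y ->
       (forall s t, J s -> J t -> s < t ->
          inertia G (x s) (y s) < inertia G (x t) (y t))
       \/
       (forall s t, J s -> J t -> s < t ->
          inertia G (x t) (y t) < inertia G (x s) (y s))).
Proof.
move=> _ _; split.
  move=> P0 J x y _ IJ S s t Js Jt.
  case: (ltgtP s t) => [st|ts|->] //.
    by apply/eqP; rewrite eq_sym -subr_eq0 (@incr _ _ _ _ _ _ _ _ IJ S Js Jt st) P0 !mulr0 oppr0 mul0r.
  by apply/eqP; rewrite -subr_eq0 (@incr _ _ _ _ _ _ _ _ IJ S Jt Js ts) P0 !mulr0 oppr0 mul0r.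
move=> P0 J x y _ IJ S.
case: (ltgtP (pair_sum G) 0) => [Pn|Pp|Pz]; last by rewrite Pz eqxx in P0.
  left => s t Js Jt st; rewrite -subr_gt0 (@incr _ _ _ _ _ _ _ _ IJ S Js Jt st).
  by apply: mulr_gt0; rewrite ?subr_gt0 // oppr_gt0 pmulr_rlt0.
right => s t Js Jt st; rewrite -subr_lt0 (@incr _ _ _ _ _ _ _ _ IJ S Js Jt st).
have h : 0 < t - s by rewrite subr_gt0.
have h2 : - (2 * pair_sum G) < 0 by rewrite oppr_lt0 mulr_gt0.
by rewrite pmulr_llt0.
Qed.
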